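(* Let $(S,\mathcal{A},\mu)$ be a complete, $\sigma$-finite measure space and $X$ an octahedral real Banach space. Then $L^1(\mu,X)$ and $L^\infty(\mu,X)$ are also octahedral.
   Context: A real Banach space $X$ is octahedral if for every finite-dimensional subspace $F$ of $X$ and every $\varepsilon>0$ there is $y\in S_X$ (the unit sphere) with $\|x+y\|\ge(1-\varepsilon)(\|x\|+1)$ for all $x\in F$. $L^1(\mu,X)$, $L^\infty(\mu,X)$ are the Lebesgue–Bochner spaces. *)

(* Defs.v *)
From HB Require Import structures.
From mathcomp Require Import all_boot all_order all_algebra.
From mathcomp Require Import all_classical all_reals all_analysis.
From mathcomp Require Import ess_sup_inf.
Set Implicit Arguments. Unset Strict Implicit. Unset Printing Implicit Defensive.
Import Order.TTheory GRing.Theory Num.Theory.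
Import numFieldNormedType.Exports.
Local Open Scope classical_set_scope.
Local Open Scope ring_scope.

(* Octahedrality of a real normed space X: for every finite-dimensional
   subspace F = span (e 0, ..., e (n-1)) and every eps > 0 there is y in the
   unit sphere with ||x + y|| >= (1 - eps)(||x|| + 1) for all x in F. *)
Definition octahedral (R : realType) (X : normedModType R) : Prop :=
  forall (n : nat) (e : 'I_n -> X) (eps : R), 0 < eps ->
  exists y : X, `|y| = 1 /\
    forall c : 'I_n -> R,
      (1 - eps) * (`|\sum_(i < n) c i *: e i| + 1)
        <= `|\sum_(i < n) c i *: e i + y|.

(* Octahedrality of a space of (classes of) functions T -> X, given as the
   set V of its representatives together with the (semi)norm N on them;
   N of a representative is the norm of its equivalence class, so this is
   exactly octahedrality of the quotient Banach space. *)
Definition octahedral_fun (T : Type) (R : realType) (X : normedModType R)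
    (V : set (T -> X)) (N : (T -> X) -> R) : Prop :=
  forall (n : nat) (e : 'I_n -> T -> X), (forall i, V (e i)) ->
  forall eps : R, 0 < eps ->
  exists y : T -> X, V y /\ N y = 1 /\
    forall c : 'I_n -> R,
      (1 - eps) * (N (fun t => \sum_(i < n) c i *: e i t) + 1)
        <= N (fun t => \sum_(i < n) c i *: e i t + y t).

Section Bochner.
Context (d : measure_display) (T : measurableType d) (R : realType)
  (X : normedModType R) (mu : {measure set T -> \bar R}).

Definition simple_fun (f : T -> X) : Prop :=
  finite_set (range f) /\ forall x : X, measurable (f @^-1` [set x]).

Definition strongly_measurable (f : T -> X) : Prop :=
  exists s : nat -> T -> X, (forall k, simple_fun (s k)) /\
    (\forall t \ae mu, (fun k => s k t) @ \oo --> f t).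

Definition L1_norm (f : T -> X) : R := fine (\int[mu]_t (`|f t|)%:E).
Definition L1_space : set (T -> X) :=
  [set f | strongly_measurable f /\ (\int[mu]_t (`|f t|)%:E < +oo)%E].

Definition Linfty_norm (f : T -> X) : R :=
  fine (ess_sup mu (fun t => (`|f t|)%:E)).
Definition Linfty_space : set (T -> X) :=
  [set f | strongly_measurable f /\ (ess_sup mu (fun t => (`|f t|)%:E) < +oo)%E].

End Bochner.

(* Main.v *)
Require Import Defs.
From HB Require Import structures.
From mathcomp Require Import all_boot all_order all_algebra.
From mathcomp Require Import all_classical all_reals all_analysis.
From mathcomp Require Import ess_sup_inf.
From mathcomp Require Import ring lra.
From mathcomp Require Import measurable_realfun.
Import Order.TTheory GRing.Theory Num.Theory.
Import numFieldNormedType.Exports.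
Local Open Scope classical_set_scope.
Local Open Scope ring_scope.
Set Implicit Arguments. Unset Strict Implicit. Unset Printing Implicit Defensive.

Lemma rV_entry_le (R : realType) n (v : 'rV[R]_n) i : `|v ord0 i| <= `|v|.
Proof.
have /mapP[j Hj ->] : `|v ord0 i| \in [seq `|v x.1 x.2| | x : 'I_1 * 'I_n].
  by apply/mapP; exists (ord0, i) => //=; rewrite mem_enum.
by rewrite [leRHS]/Num.norm /= mx_normrE; apply/bigmax_geP; right => /=; exists j.
Qed.

Lemma semi_ge0 (R : realType) n (p : ('I_n -> R) -> R) :
  (forall c c', p (fun i => c i + c' i) <= p c + p c') ->
  (forall a c, p (fun i => a * c i) = `|a| * p c) ->
  forall c, 0 <= p c.
Proof.
move=> pD pZ.
have p0 : p (fun _ => 0) = 0.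
  have e : (fun _ : 'I_n => (0:R)) = (fun i => 0 * (fun _ => (0:R)) i).
    by apply: funext => i; rewrite mul0r.
  by rewrite e pZ normr0 mul0r.
move=> c.
have := pD c (fun i => -1 * c i); rewrite pZ normrN normr1 mul1r.
have -> : (fun i => c i + -1 * c i) = (fun _ => 0).
  by apply: funext => i; rewrite mulN1r subrr.
by rewrite p0 => H; lra.
Qed.

Lemma dichot (R : realType) n (p : ('I_n -> R) -> R) :
  (forall c c', p (fun i => c i + c' i) <= p c + p c') ->
  (forall a c, p (fun i => a * c i) = `|a| * p c) ->
  (exists L, forall c, p c <= L * \sum_i `|c i|) ->
  (exists2 k, 0 < k & forall c, k * \sum_i `|c i| <= p c) \/
  (exists c, (exists j, c j != 0) /\ p c = 0).
Proof.
move=> pD pZ [L pL].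
have pge0 := semi_ge0 pD pZ.
destruct n as [|m].
  by left; exists 1 => // c; rewrite big_ord0 mulr0.
pose q (v : 'rV[R]_m.+1) := p (fun i => v ord0 i).
pose A := [set v : 'rV[R]_m.+1 | `|v| = 1].
have vne : (const_mx 1 : 'rV[R]_m.+1) != 0.
  apply/eqP => /matrixP /(_ ord0 ord0); rewrite !mxE => /eqP.
  by rewrite oner_eq0.
have A0 : A !=set0.
  exists (`|const_mx 1 : 'rV[R]_m.+1|^-1 *: const_mx 1).
  by rewrite /A /= normrZ normrV ?unitfE ?normr_eq0// normr_id mulVf// normr_eq0.
have cA : compact A.
  apply: bounded_closed_compact.
    rewrite /bounded_set /= /bounded_near; near=> M => v; rewrite /A /= => ->.
    by near: M; apply: nbhs_pinfty_ge.
  have -> : A = (fun v => `|v|) @^-1` [set x | x = 1] by [].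
  apply: closed_comp; last exact: closed_eq.
  by move=> v _; apply: norm_continuous.
have qlip v w : `|q v - q w| <= L * m.+1%:R * `|v - w|.
  have key a b : q a - q b <= L * m.+1%:R * `|a - b|.
    have : q a <= q b + q (a - b).
      rewrite /q; apply: le_trans (pD _ _); rewrite le_eqVlt; apply/orP; left; apply/eqP; congr p.
      by apply: funext => i; rewrite !mxE addrCA subrr addr0.
    move=> H; rewrite lerBlDl; apply: (le_trans H); rewrite lerD2l.
    apply: (le_trans (pL _)).
    have L0 : 0 <= L.
      have := pL (fun i => 1); under eq_bigr do rewrite normr1.
      rewrite sumr_const card_ord => H1.
      have := le_trans (pge0 _) H1.
      by rewrite pmulr_lge0 // ltr0n.
    rewrite -mulrA ler_wpM2l //.
    apply: le_trans (_ : \sum_(i < m.+1) `|a - b| <= _).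
      by apply: ler_sum => i _; apply: rV_entry_le.
    by rewrite sumr_const card_ord mulr_natl.
  rewrite ler_norml key andbT.
  by rewrite lerNl opprB -normrN opprB; apply: key.
have qc : {within A, continuous q}.
  apply: continuous_subspaceT => v.
  have L0 : 0 <= L.
    have := pL (fun i => 1); under eq_bigr do rewrite normr1.
    rewrite sumr_const card_ord => H1.
    have := le_trans (pge0 _) H1.
    by rewrite pmulr_lge0 // ltr0n.
  have K0 : 0 < L * m.+1%:R + 1 by rewrite ltr_wpDl// mulr_ge0.
  apply/(@cvgrPdist_le _ _ _ _ (nbhs_filter v)) => eps eps0.
  have d0 : 0 < eps / (L * m.+1%:R + 1) by rewrite divr_gt0.
  have : \forall w \near v, `|v - w| <= eps / (L * m.+1%:R + 1).
    exact: ((cvgrPdist_le _ _).1 (@cvg_id _ (nbhs v)) _ d0).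
  apply: filterS => w Hw.
  apply: le_trans (qlip v w) _.
  apply: le_trans (ler_wpM2l (mulr_ge0 L0 (ler0n _ _)) Hw) _.
  rewrite mulrA ler_pdivrMr// [leLHS]mulrC ler_wpM2l ?ltW//; lra.
have [c0 c0A c0min] := EVT_min_rV A0 cA qc.
have c0n : `|c0| = 1 by move: c0A; rewrite inE.
have [qpos|] := ltP 0 (q c0).
  left; exists (q c0 / m.+1%:R); first by rewrite divr_gt0.
  move=> c; pose v := \row_i c i.
  have Sle : \sum_i `|c i| <= m.+1%:R * `|v|.
    apply: le_trans (_ : \sum_(i < m.+1) `|v| <= _).
      by apply: ler_sum => i _; have := rV_entry_le v i; rewrite mxE.
    by rewrite sumr_const card_ord mulr_natl.
  have [v0|vn0] := eqVneq v 0.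
    suff -> : \sum_i `|c i| = 0 by rewrite mulr0.
    apply/eqP; rewrite eq_le [0 <= _]sumr_ge0 ?andbT; last by move=> i _; exact: normr_ge0.
    by apply: (le_trans Sle); rewrite v0 normr0 mulr0.
  have vpos : 0 < `|v| by rewrite normr_gt0.
  have uA : (`|v|^-1 *: v) \in A.
    by rewrite inE /A /= normrZ normrV ?unitfE ?normr_eq0// normr_id mulVf// normr_eq0.
  have := c0min _ uA; rewrite /q.
  have -> : (fun i => (`|v|^-1 *: v) ord0 i) = (fun i => `|v|^-1 * c i).
    by apply: funext => i; rewrite !mxE.
  rewrite pZ normrV ?unitfE ?normr_eq0// normr_id => H.
  rewrite mulrAC ler_pdivrMr ?ltr0n//.
  apply: le_trans (_ : q c0 * (m.+1%:R * `|v|) <= _).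
    by rewrite ler_wpM2l// ?ltW.
  have H' : q c0 * `|v| <= p c by rewrite -ler_pdivlMr// mulrC.
  by rewrite [p c * _]mulrC mulrCA ler_pM2l ?ltr0n.
move=> q0; right; exists (fun i => c0 ord0 i); split; last first.
  by apply/eqP; rewrite eq_le q0 pge0.
case: (pselect (exists j, c0 ord0 j != 0)) => // H.
have : c0 = 0.
  apply/matrixP => i j; rewrite mxE (ord1 i).
  by apply/eqP/negPn/negP => Hj; apply: H; exists j.
by move=> c00; move: c0n; rewrite c00 normr0 => /eqP; rewrite eq_sym oner_eq0.
Unshelve. all: by end_near.
Qed.
Section Abstract.
Context (T : Type) (R : realType) (X : normedModType R)
  (V : set (T -> X)) (N : (T -> X) -> R).
Hypothesis V0 : V (fun _ => 0).
Hypothesis VD : forall f g, V f -> V g -> V (fun t => f t + g t).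
Hypothesis VZ : forall (a : R) f, V f -> V (fun t => a *: f t).
Hypothesis ND : forall f g, V f -> V g -> N (fun t => f t + g t) <= N f + N g.
Hypothesis NZ : forall (a : R) f, V f -> N (fun t => a *: f t) = `|a| * N f.

Lemma Vsum n (e : 'I_n -> T -> X) (c : 'I_n -> R) : (forall i, V (e i)) ->
  V (fun t => \sum_(i < n) c i *: e i t).
Proof.
elim: n e c => [|n IH] e c He.
  by have -> : (fun t => \sum_(i < 0) c i *: e i t) = (fun _ => 0)
    by apply: funext => t; rewrite big_ord0.
have -> : (fun t => \sum_(i < n.+1) c i *: e i t) =
   (fun t => (\sum_(i < n) c (widen_ord (leqnSn n) i) *: e (widen_ord (leqnSn n) i) t)
      + c ord_max *: e ord_max t).
  by apply: funext => t; rewrite big_ord_recr.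
apply: VD; last exact: VZ.
exact: (IH (fun i => e (widen_ord (leqnSn n) i))).
Qed.

Lemma N_ge0 f : V f -> 0 <= N f.
Proof.
move=> Vf.
have H := ND Vf (VZ (-1) Vf); rewrite NZ // normrN normr1 mul1r in H.
have e : (fun t => f t + -1 *: f t) = (fun t => 0 *: f t).
  by apply: funext => t; rewrite scaleN1r subrr scale0r.
by move: H; rewrite e NZ // normr0 mul0r => H; lra.
Qed.

Lemma N_add0 u w : V u -> V w -> N w = 0 -> N (fun t => u t + w t) = N u.
Proof.
move=> Vu Vw Nw; apply/eqP; rewrite eq_le; apply/andP; split.
  by apply: le_trans (ND Vu Vw) _; rewrite Nw addr0.
have := ND (VD Vu Vw) (VZ (-1) Vw); rewrite NZ // normrN normr1 mul1r Nw addr0.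
have -> // : (fun t => u t + w t + -1 *: w t) = u.
by apply: funext => t; rewrite scaleN1r addrK.
Qed.

Lemma N0 : N (fun _ => 0) = 0.
Proof.
have -> : (fun _ : T => (0 : X)) = (fun t => 0 *: (fun _ => (0 : X)) t).
  by apply: funext => t; rewrite scale0r.
by rewrite NZ // normr0 mul0r.
Qed.

Lemma N_sum_le n (e : 'I_n -> T -> X) (c : 'I_n -> R) : (forall i, V (e i)) ->
  N (fun t => \sum_(i < n) c i *: e i t) <= \sum_(i < n) `|c i| * N (e i).
Proof.
elim: n e c => [|n IH] e c He.
  have -> : (fun t => \sum_(i < 0) c i *: e i t) = (fun _ => 0).
    by apply: funext => t; rewrite big_ord0.
  by rewrite N0 big_ord0.
have -> : (fun t => \sum_(i < n.+1) c i *: e i t) =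
   (fun t => (\sum_(i < n) c (widen_ord (leqnSn n) i) *: e (widen_ord (leqnSn n) i) t)
      + c ord_max *: e ord_max t).
  by apply: funext => t; rewrite big_ord_recr.
rewrite big_ord_recr /=.
apply: le_trans (ND _ _) _.
- exact: (Vsum (fun i => c (widen_ord (leqnSn n) i)) (fun i => He (widen_ord (leqnSn n) i))).
- exact: VZ.
rewrite NZ //; apply: lerD => //.
exact: (IH (fun i => e (widen_ord (leqnSn n) i))).
Qed.

Hypothesis Hind : forall n (e : 'I_n -> T -> X), (forall i, V (e i)) ->
  (exists2 k, 0 < k & forall c, k * \sum_i `|c i| <= N (fun t => \sum_(i < n) c i *: e i t)) ->
  forall eps : R, 0 < eps ->
  exists y : T -> X, V y /\ N y = 1 /\
    forall c : 'I_n -> R,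
      (1 - eps) * (N (fun t => \sum_(i < n) c i *: e i t) + 1)
        <= N (fun t => \sum_(i < n) c i *: e i t + y t).

Lemma octa_reduce : octahedral_fun V N.
Proof.
move=> n; elim: n => [|m IH] e He eps eps0.
  apply: Hind => //; exists 1 => // c; rewrite big_ord0 mulr0.
  by apply: N_ge0; apply: Vsum.
pose p c := N (fun t => \sum_(i < m.+1) c i *: e i t).
have pD c c' : p (fun i => c i + c' i) <= p c + p c'.
  rewrite /p; apply: le_trans (ND (Vsum c He) (Vsum c' He)).
  rewrite le_eqVlt; apply/orP; left; apply/eqP; congr N; apply: funext => t.
  by rewrite -big_split /=; apply: eq_bigr => i _; rewrite scalerDl.
have pZ a c : p (fun i => a * c i) = `|a| * p c.
  rewrite /p -NZ; last exact: Vsum.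
  congr N; apply: funext => t.
  by rewrite scaler_sumr; apply: eq_bigr => i _; rewrite scalerA.
have pL : exists L, forall c, p c <= L * \sum_i `|c i|.
  exists (\sum_i N (e i)) => c; apply: le_trans (N_sum_le c He) _.
  rewrite mulr_sumr; apply: ler_sum => i _; rewrite mulrC ler_wpM2r //.
  rewrite (bigD1 i) //= lerDl; apply: sumr_ge0 => k _; exact: N_ge0.
have [Hk|[c0 [[j cj] pc0]]] := dichot pD pZ pL; first exact: Hind.
pose e' i := e (lift j i).
have [y [Vy [Ny Hy]]] := IH e' (fun i => He (lift j i)) eps eps0.
exists y; split => //; split => // c.
pose a := c j / c0 j.
pose c' i := c i - a * c0 i.
have Vc0 := Vsum c0 He.
have Vc' := Vsum c' He.
have Na : N (fun t => a *: \sum_(i < m.+1) c0 i *: e i t) = 0.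
  by rewrite NZ // -/(p c0) pc0 mulr0.
have E1 : (fun t => \sum_(i < m.+1) c i *: e i t) =
   (fun t => \sum_(i < m.+1) c' i *: e i t + a *: \sum_(i < m.+1) c0 i *: e i t).
  apply: funext => t; rewrite scaler_sumr -big_split /=; apply: eq_bigr => i _.
  by rewrite /c' scalerBl scalerA subrK.
have E2 : (fun t => \sum_(i < m.+1) c' i *: e i t) =
   (fun t => \sum_(i < m) c' (lift j i) *: e' i t).
  apply: funext => t; rewrite (bigD1_ord j) //=.
  by rewrite /c' /a divfK // subrr scale0r add0r.
have -> : N (fun t => \sum_(i < m.+1) c i *: e i t) = N (fun t => \sum_(i < m) c' (lift j i) *: e' i t).
  by rewrite E1 N_add0 // ?E2 //; exact: VZ.
have -> : N (fun t => \sum_(i < m.+1) c i *: e i t + y t) = N (fun t => \sum_(i < m) c' (lift j i) *: e' i t + y t).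
  have -> : (fun t => \sum_(i < m.+1) c i *: e i t + y t) =
     (fun t => (\sum_(i < m.+1) c' i *: e i t + y t) + a *: \sum_(i < m.+1) c0 i *: e i t).
    apply: funext => t; have := congr1 (fun f => f t) E1 => /= ->.
    by rewrite addrAC.
  rewrite N_add0 //; last 2 first.
  - exact: VD.
  - exact: VZ.
  congr N; apply: funext => t; congr (_ + _).
  by have := congr1 (fun f => f t) E2.
exact: Hy.
Qed.

End Abstract.
Section Meas.
Context d (T : measurableType d) (R : realType) (X : normedModType R)
  (mu : {measure set T -> \bar R}).

Lemma simple_preimage (f : T -> X) : simple_fun f -> forall B, measurable (f @^-1` B).
Proof.
move=> [fin mf] B.
have -> : f @^-1` B = \bigcup_(x in range f `&` B) f @^-1` [set x].
  apply/seteqP; split => [t Bt|t [x [_ Bx] /= ->]] //.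
  by exists (f t) => //; split => //; exists t.
by apply: fin_bigcup_measurable; [exact: finite_setIl | move=> x _; exact: mf].
Qed.

Lemma simple_cst (x : X) : simple_fun (fun _ : T => x).
Proof.
split.
  by apply: (sub_finite_set _ (finite_set1 x)) => y [t _ <-].
by move=> y; rewrite (preimage_cst x [set y]); case: ifP.
Qed.

Lemma simple_add (f g : T -> X) : simple_fun f -> simple_fun g ->
  simple_fun (fun t => f t + g t).
Proof.
move=> sf sg; split.
  apply: (sub_finite_set _ (finite_image2 (fun a b => a + b) sf.1 sg.1)).
  by move=> y [t _ <-]; exists (f t); [exists t|exists (g t); [exists t|]].
move=> x.
have -> : (fun t => f t + g t) @^-1` [set x] =
    \bigcup_(a in range f) (f @^-1` [set a] `&` g @^-1` [set x - a]).
  apply/seteqP; split => [t /= <-|t [a _ /= [ft gt]]].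
    by exists (f t); [exists t|split => //; rewrite addrC addKr].
  by rewrite ft gt addrC subrK.
apply: fin_bigcup_measurable; first exact: sf.1.
by move=> a _; apply: measurableI; [exact: sf.2|exact: sg.2].
Qed.

Lemma simple_scale (a : R) (f : T -> X) : simple_fun f ->
  simple_fun (fun t => a *: f t).
Proof.
move=> sf; split.
  apply: (sub_finite_set _ (finite_image (fun y => a *: y) sf.1)).
  by move=> y [t _ <-]; exists (f t) => //; exists t.
move=> x.
by have := simple_preimage sf [set y | a *: y = x].
Qed.

Lemma SM_add (f g : T -> X) : strongly_measurable mu f -> strongly_measurable mu g ->
  strongly_measurable mu (fun t => f t + g t).
Proof.
move=> [s [ss Hs]] [s' [ss' Hs']].
exists (fun k t => s k t + s' k t); split.
  by move=> k; apply: simple_add.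
apply: filterS2 Hs Hs' => t H1 H2.
exact: cvgD.
Qed.

Lemma SM_scale (a : R) (f : T -> X) : strongly_measurable mu f ->
  strongly_measurable mu (fun t => a *: f t).
Proof.
move=> [s [ss Hs]].
exists (fun k t => a *: s k t); split.
  by move=> k; apply: simple_scale.
apply: filterS Hs => t H1.
exact: cvgZl_tmp.
Qed.

Lemma SM_cst (x : X) : strongly_measurable mu (fun _ => x).
Proof.
exists (fun _ _ => x); split; first by move=> k; apply: simple_cst.
by apply: nearW => t; exact: cvg_cst.
Qed.

Hypothesis cmu : measure_is_complete mu.

Lemma SM_norm_meas (f : T -> X) : strongly_measurable mu f ->
  measurable_fun setT (fun t => `|f t|).
Proof.
move=> [s [ss Hs]].
apply/measurable_EFinP.
have mh k : measurable_fun setT (fun t => ((`|s k t|)%:E : \bar R)).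
  apply/measurable_EFinP => _ B mB; rewrite setTI.
  exact: (simple_preimage (ss k) [set y | B `|y|]).
apply: (ae_measurable_fun cmu _ (measurable_fun_limn_esup mh)).
apply: filterS Hs => t H _ /=.
rewrite is_cvg_limn_esupE.
  apply: cvg_lim => //; apply: cvg_EFin; first exact: nearW.
  exact: cvg_norm.
apply/cvg_ex; exists (`|f t|)%:E; apply: cvg_EFin; first exact: nearW.
exact: cvg_norm.
Qed.

End Meas.
Section Helpers.
Context (R : realType) (X : normedModType R).

Lemma span_lemma (w : seq X) n (v : 'I_n -> X) : (forall i, v i \in w) ->
  forall c : 'I_n -> R, exists b : 'I_(size w) -> R,
    \sum_(i < n) c i *: v i = \sum_(j < size w) b j *: nth 0 w j.
Proof.
elim: n v => [|n IH] v Hv c.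
  by exists (fun _ => 0); rewrite big_ord0; under eq_bigr do rewrite scale0r; rewrite big1.
have [b Hb] := IH (fun i => v (widen_ord (leqnSn n) i)) (fun i => Hv _)
   (fun i => c (widen_ord (leqnSn n) i)).
have Hm : (index (v ord_max) w < size w)%N by rewrite index_mem.
pose j0 := Ordinal Hm.
exists (fun j => b j + (if j == j0 then c ord_max else 0)).
rewrite big_ord_recr /= Hb.
under [RHS]eq_bigr do rewrite scalerDl.
rewrite big_split /=; congr (_ + _).
rewrite (bigD1 j0) //= eqxx big1 ?addr0.
  by rewrite /j0 /= nth_index.
by move=> j /negPf ->; rewrite scale0r.
Qed.

Lemma oct_scaled m (u : 'I_m -> X) (eps : R) (z : X) :
  0 < eps ->
  (forall b : 'I_m -> R, (1 - eps) * (`|\sum_j b j *: u j| + 1) <= `|\sum_j b j *: u j + z|) ->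
  forall (b : 'I_m -> R) (lam : R), 0 <= lam ->
  (1 - eps) * (`|\sum_j b j *: u j| + lam) <= `|\sum_j b j *: u j + lam *: z|.
Proof.
move=> eps0 H b lam lamge0; have [->|lamn0] := eqVneq lam 0.
  rewrite scale0r addr0 addr0 mulrBl mul1r lerBlDr lerDl.
  by rewrite mulr_ge0 // ltW.
have lam0 : 0 < lam by rewrite lt_neqAle eq_sym lamn0.
have := H (fun j => lam^-1 * b j).
have -> : \sum_j lam^-1 * b j *: u j = lam^-1 *: \sum_j b j *: u j.
  by rewrite scaler_sumr; apply: eq_bigr => j _; rewrite scalerA.
have -> : lam^-1 *: \sum_j b j *: u j + z = lam^-1 *: (\sum_j b j *: u j + lam *: z).
  by rewrite scalerDr scalerA mulVf ?gt_eqF // scale1r.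
rewrite !normrZ ger0_norm; last by rewrite invr_ge0 ltW.
move=> H2.
have := ler_wpM2l (ltW lam0) H2.
rewrite [X in _ <= X -> _]mulrA divff ?gt_eqF // mul1r.
suff -> : lam * ((1 - eps) * (lam^-1 * `|\sum_j b j *: u j| + 1)) =
   (1 - eps) * (`|\sum_j b j *: u j| + lam) by [].
by rewrite mulrCA mulrDr mulrA divff ?gt_eqF // mul1r mulr1.
Qed.

Lemma approx_ineq (eps : R) (F G z : X) (lam D : R) : 0 < eps -> 0 <= lam ->
  (1 - eps) * (`|G| + lam) <= `|G + lam *: z| -> `|F - G| <= D ->
  (1 - eps) * (`|F| + lam) <= `|F + lam *: z| + 2 * D.
Proof.
move=> eps0 lam0 H HD.
have D0 : 0 <= D by apply: le_trans HD.
have h1 : `|F| <= `|G| + D.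
  have := ler_normD (F - G) G; rewrite subrK => h; lra.
have h2 : `|G + lam *: z| <= `|F + lam *: z| + D.
  have e : G + lam *: z = (F + lam *: z) - (F - G).
    by rewrite [RHS]addrC opprB addrA subrK.
  by rewrite e; apply: le_trans (ler_normB _ _) _; rewrite lerD2l.
have f0 : 0 <= `|F| by [].
have [e0|e0] := leP 0 (1 - eps).
  have h3 : (1 - eps) * `|F| <= (1 - eps) * (`|G| + D) by rewrite ler_wpM2l.
  have h4 : (1 - eps) * D <= D by rewrite ler_piMl //; lra.
  rewrite mulrDr in H h3 *; rewrite mulrDr in h3; lra.
have : (1 - eps) * (`|F| + lam) <= 0 by rewrite nmulr_rle0 //; apply: addr_ge0.
have : 0 <= `|F + lam *: z| by [].
lra.
Qed.

End Helpers.
Section Meas2.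
Context d (T : measurableType d) (R : realType) (X : normedModType R)
  (mu : {measure set T -> \bar R}).

Lemma K_meas (K : T -> nat) : (forall k, measurable (K @^-1` [set k])) ->
  forall A, measurable (K @^-1` A).
Proof.
move=> HK A.
have -> : K @^-1` A = \bigcup_(k in A) K @^-1` [set k].
  by apply/seteqP; split => [t At|t [k Ak /= ->]] //; exists (K t).
by apply: bigcup_measurable => k _; exact: HK.
Qed.

Lemma SM_countable (K : T -> nat) (z : nat -> X) :
  (forall k, measurable (K @^-1` [set k])) ->
  strongly_measurable mu (fun t => z (K t)).
Proof.
move=> HK; exists (fun M t => z (minn (K t) M)); split.
  move=> M; split.
    apply: (sub_finite_set _ (finite_image z (finite_II M.+1))).
    move=> x [t _ <-]; exists (minn (K t) M) => //=.
    by rewrite ltnS geq_minr.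
  by move=> x; exact: (K_meas HK [set j | z (minn j M) = x]).
apply: nearW => t; apply: cvg_near_cst.
by near=> M; rewrite (minn_idPl _); [|near: M; exact: nbhs_infty_ge].
Unshelve. all: by end_near.
Qed.

Lemma simple_sub (f g : T -> X) : simple_fun f -> simple_fun g ->
  simple_fun (fun t => f t - g t).
Proof.
move=> sf sg; have := simple_add sf (simple_scale (-1) sg).
by under eq_fun do rewrite scaleN1r.
Qed.

Lemma xget_min (P : nat -> Prop) :
  let k := xget 0%N [set k | P k /\ forall j, P j -> (k <= j)%N] in
  ((exists j, P j) -> P k /\ forall j, P j -> (k <= j)%N) /\
  (~ (exists j, P j) -> k = 0%N).
Proof.
move=> k; split.
  move=> [j Pj]; apply: (@xgetPex _ 0%N [set k | P k /\ forall j, P j -> (k <= j)%N]).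
  have ex : exists j, `[< P j >] by exists j; apply/asboolP.
  case: (ex_minnP ex) => m /asboolP Pm mmin.
  by exists m; split => // i Pi; apply: mmin; apply/asboolP.
by move=> nex; apply: xgetPN => x [Px _]; apply: nex; exists x.
Qed.

End Meas2.
Section Construct.
Context d (T : measurableType d) (R : realType) (X : normedModType R)
  (mu : {measure set T -> \bar R}).

Lemma construct n (e : 'I_n -> T -> X) (eps delta : R) :
  (forall i, strongly_measurable mu (e i)) ->
  octahedral X -> 0 < eps -> 0 < delta ->
  exists (K : T -> nat) (z : nat -> X),
   (forall k, measurable (K @^-1` [set k])) /\ (forall k, `|z k| = 1) /\
   \forall t \ae mu, forall (c : 'I_n -> R) (lam : R), 0 <= lam ->
     (1 - eps) * (`|\sum_i c i *: e i t| + lam) <=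
       `|\sum_i c i *: e i t + lam *: z (K t)| + 2 * (delta * \sum_i `|c i|).
Proof.
move=> He oct eps0 delta0.
have [s Hs] : exists s : 'I_n -> nat -> T -> X, forall i,
    (forall k, simple_fun (s i k)) /\ \forall t \ae mu, s i k t @[k --> \oo] --> e i t.
  by exists (fun i => sval (cid (He i))) => i; exact: svalP (cid (He i)).
pose W k := \bigcup_(i in [set: 'I_n]) range (s i k).
have finW k : finite_set (W k).
  apply: bigcup_finite; first exact: finite_finset.
  by move=> i _; exact: ((Hs i).1 k).1.
pose w k : seq X := finmap.enum_fset (fset_set (W k)).
have inw k i t : s i k t \in w k.
  rewrite /w in_fset_set //; rewrite inE; exists i => //; exists t.
have [z Hz] : exists z : nat -> X, forall k, (`|z k| = 1) /\ forall b : 'I_(size (w k)) -> R,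
      (1 - eps) * (`|\sum_j b j *: nth 0 (w k) j| + 1) <=
        `|\sum_j b j *: nth 0 (w k) j + z k|.
  exists (fun k => sval (cid (oct _ (fun j : 'I_(size (w k)) => nth 0 (w k) j) eps eps0))).
  by move=> k; exact: svalP (cid (oct _ (fun j : 'I_(size (w k)) => nth 0 (w k) j) eps eps0)).
pose P k t := forall i m, (k <= m)%N -> `|s i m t - s i k t| <= delta.
have mP k : measurable [set t | P k t].
  have -> : [set t | P k t] = \bigcap_(m in [set m | (k <= m)%N])
      ~` \bigcup_(i in [set: 'I_n]) ~` [set t | `|s i m t - s i k t| <= delta].
    apply/seteqP; split => [t Pt m km [i _ /= H]|t H i m km]; first exact: H (Pt i m km).
    have := H m km; rewrite /= => H'; apply: contrapT => Hn; apply: H'.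
    by exists i.
  apply: bigcap_measurable => [|m _]; first by exists k => /=.
  apply: measurableC; apply: fin_bigcup_measurable; first exact: finite_finset.
  move=> i _; apply: measurableC.
  exact: (simple_preimage (simple_sub ((Hs i).1 m) ((Hs i).1 k)) [set y | `|y| <= delta]).
pose K t := xget 0%N [set k | P k t /\ forall j, P j t -> (k <= j)%N].
have KP t : ((exists j, P j t) -> P (K t) t /\ forall j, P j t -> (K t <= j)%N) /\
    (~ (exists j, P j t) -> K t = 0%N) := xget_min (fun j => P j t).
have HK : forall k, measurable (K @^-1` [set k]).
  move=> k.
  have -> : K @^-1` [set k] = ([set t | P k t] `&` ~` \bigcup_(j in `I_k) [set t | P j t])
     `|` (if k == 0%N then ~` \bigcup_(j in [set: nat]) [set t | P j t] else set0).
    apply/seteqP; split => t /=.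
    - move=> Kt; have [Hex Hnex] := KP t.
      have [ex|nex] := pselect (exists j, P j t).
        have [Pk kmin] := Hex ex; left; split; first by rewrite -Kt.
        move=> [j /= jk Pj]; have := kmin j Pj; rewrite Kt => kj.
        by move: jk; rewrite ltnNge kj.
      right; have K0 := Hnex nex; rewrite -Kt K0 eqxx.
      by move=> [j _ Pj]; apply: nex; exists j.
    - have [Hex Hnex] := KP t.
      case => [[Pk nlt]|].
        have [PK Kmin] := Hex (ex_intro _ k Pk).
        apply/eqP; rewrite eqn_leq Kmin // leqNgt; apply/negP => Kk.
        by apply: nlt; exists (K t).
      case: eqP => [-> nP|_ //].
      apply: Hnex => -[j Pj]; apply: nP; by exists j.
  apply: measurableU.
    apply: measurableI; first exact: mP.
    apply: measurableC; apply: fin_bigcup_measurable; first exact: finite_II.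
    by move=> j _; exact: mP.
  case: ifP => _; last exact: measurable0.
  by apply: measurableC; apply: bigcup_measurable => j _; exact: mP.
exists K, z; split => //; split; first by move=> k; exact: (Hz k).1.
have Gd : \forall t \ae mu, forall i, s i k t @[k --> \oo] --> e i t.
  by apply: filter_forall => i; exact: (Hs i).2.
apply: filterS Gd => t Ht c lam lam0.
have [Hex _] := KP t.
have d2 : 0 < delta / 2 by rewrite divr_gt0.
have ex : exists j, P j t.
  have : \forall m \near \oo, forall i, `|e i t - s i m t| <= delta / 2.
    apply: filter_forall => i.
    exact: ((cvgrPdist_le _ _).1 (Ht i) _ d2).
  case => N0 _ HN.
  exists N0 => i m Nm.
  have h1 := HN m Nm i; have h2 := HN N0 (leqnn _) i.
  apply: le_trans (ler_distD (e i t) _ _) _.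
  by rewrite (splitr delta) lerD // distrC.
have [PK Kmin] := Hex ex.
have close i : `|e i t - s i (K t) t| <= delta.
  apply/ler_addgt0Pr => eta eta0.
  have : \forall m \near \oo, `|e i t - s i m t| <= eta.
    exact: ((cvgrPdist_le _ _).1 (Ht i) _ eta0).
  case => N1 _ HN1.
  pose m := maxn N1 (K t).
  apply: le_trans (ler_distD (s i m t) _ _) _.
  rewrite addrC lerD //; first by apply: PK; rewrite /m leq_maxr.
  by apply: HN1; rewrite /= /m leq_maxl.
have [b Hb] := span_lemma (fun i => inw (K t) i t) c.
have oct2 := oct_scaled eps0 (Hz (K t)).2 b lam0.
rewrite -Hb in oct2.
apply: approx_ineq eps0 lam0 oct2 _.
rewrite -sumrB; under eq_bigr do rewrite -scalerBr.
apply: le_trans (ler_norm_sum _ _ _) _; rewrite mulr_sumr; apply: ler_sum => i _.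
by rewrite normrZ [delta * _]mulrC ler_wpM2l.
Qed.

End Construct.
Section Linf.
Context d (T : measurableType d) (R : realType) (X : normedModType R)
  (mu : {measure set T -> \bar R}).
Hypothesis mT : (0 < mu setT)%E.
Local Notation es f := (ess_sup mu (fun t => (`|f t|)%:E)).
Local Notation V := (Linfty_space (X:=X) mu).
Local Notation N := (Linfty_norm (X:=X) mu).

Lemma es_ge0 (f : T -> X) : (0 <= es f)%E.
Proof. by apply: ess_sup_ger => // t; rewrite lee_fin. Qed.

Lemma es_fin (f : T -> X) : V f -> es f \is a fin_num.
Proof. by move=> [_ H]; rewrite ge0_fin_numE // es_ge0. Qed.

Lemma es_add (f g : T -> X) : (es (fun t => f t + g t) <= es f + es g)%E.
Proof.
apply: le_trans (ess_supD _ _ _).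
by apply: le_ess_sup; apply: nearW => t /=; rewrite lee_fin ler_normD.
Qed.

Lemma es_scale (a : R) (f : T -> X) : es (fun t => a *: f t) = ((`|a|)%:E * es f)%E.
Proof.
rewrite -ess_supZl //; congr ess_sup; apply: funext => t /=.
by rewrite normrZ EFinM.
Qed.

Lemma Linf_V0 : V (fun _ => 0).
Proof.
split; first exact: SM_cst.
have -> : (fun t : T => (`|(0 : X)|)%:E) = cst 0%E.
  by apply: funext => t; rewrite normr0.
by rewrite ess_sup_cst.
Qed.

Lemma Linf_VD f g : V f -> V g -> V (fun t => f t + g t).
Proof.
move=> Vf Vg; split; first exact: SM_add Vf.1 Vg.1.
apply: le_lt_trans (es_add f g) _.
by rewrite -(fineK (es_fin Vf)) -(fineK (es_fin Vg)) -EFinD ltry.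
Qed.

Lemma Linf_VZ a f : V f -> V (fun t => a *: f t).
Proof.
move=> Vf; split; first exact: SM_scale Vf.1.
by rewrite es_scale -(fineK (es_fin Vf)) -EFinM ltry.
Qed.

Lemma Linf_ND f g : V f -> V g -> N (fun t => f t + g t) <= N f + N g.
Proof.
move=> Vf Vg; rewrite /Linfty_norm.
have Vfg := Linf_VD Vf Vg.
rewrite -lee_fin EFinD !fineK ?es_fin //; exact: es_add.
Qed.

Lemma Linf_NZ a f : V f -> N (fun t => a *: f t) = `|a| * N f.
Proof.
move=> Vf; rewrite /Linfty_norm es_scale.
by rewrite -(fineK (es_fin Vf)) -EFinM /=.
Qed.

Lemma Linf_ind : octahedral X -> forall n (e : 'I_n -> T -> X), (forall i, V (e i)) ->
  (exists2 k, 0 < k & forall c, k * \sum_i `|c i| <= N (fun t => \sum_(i < n) c i *: e i t)) ->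
  forall eps : R, 0 < eps ->
  exists y : T -> X, V y /\ N y = 1 /\
    forall c : 'I_n -> R,
      (1 - eps) * (N (fun t => \sum_(i < n) c i *: e i t) + 1)
        <= N (fun t => \sum_(i < n) c i *: e i t + y t).
Proof.
move=> oct n e He [k k0 Hk] eps eps0.
have SMe i := (He i).1.
pose delta := eps * k / 4.
have eps20 : 0 < eps / 2 by rewrite divr_gt0.
have delta0 : 0 < delta by rewrite divr_gt0 // mulr_gt0.
have [K [z [HK [Hz Hae]]]] := construct SMe oct eps20 delta0.
pose y t := z (K t).
have esy : es y = 1%:E.
  have -> : (fun t => (`|y t|)%:E) = cst 1%:E by apply: funext => t; rewrite /y Hz.
  exact: ess_sup_cst.
have Vy : V y by split; [exact: SM_countable|rewrite esy ltry].
exists y; split => //; split; first by rewrite /Linfty_norm esy.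
move=> c.
pose F t := \sum_(i < n) c i *: e i t.
have VF : V F := Vsum (@Linf_V0) (@Linf_VD) (@Linf_VZ) c He.
have VFy : V (fun t => F t + y t) := Linf_VD VF Vy.
have NF0 : 0 <= N F by rewrite /Linfty_norm fine_ge0 // es_ge0.
have NFy0 : 0 <= N (fun t => F t + y t) by rewrite /Linfty_norm fine_ge0 // es_ge0.
have [eps1|eps1] := leP 1 eps.
  apply: le_trans NFy0; rewrite mulr_le0_ge0 //; first by rewrite subr_le0.
  by rewrite addr_ge0.
set M := es (fun t => F t + y t).
have Mfin : M \is a fin_num := es_fin VFy.
have HM : \forall t \ae mu, `|F t + y t| <= fine M.
  apply: filterS (ess_sup_ge mu (fun t => (`|F t + y t|)%:E)) => t.
  by rewrite -/M -(fineK Mfin) lee_fin.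
pose S := \sum_i `|c i|.
have e2 : 0 < 1 - eps / 2 by lra.
have bound : \forall t \ae mu, `|F t| <= (fine M + 2 * (delta * S)) / (1 - eps / 2) - 1.
  apply: filterS2 HM Hae => t h1 h2.
  have := h2 c 1 ler01; rewrite scale1r -/(F t) -/(y t) => h3.
  rewrite lerBrDr ler_pdivlMr //; rewrite mulrC.
  by apply: le_trans h3 _; rewrite lerD2r.
have esF : (es F <= ((fine M + 2 * (delta * S)) / (1 - eps / 2) - 1)%:E)%E.
  by apply/ess_supP; apply: filterS bound => t; rewrite lee_fin.
have NF : N F <= (fine M + 2 * (delta * S)) / (1 - eps / 2) - 1.
  by rewrite -lee_fin /Linfty_norm fineK // es_fin.
have kS : k * S <= N F := Hk c.
have h4 : (1 - eps / 2) * (N F + 1) <= fine M + 2 * (delta * S).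
  by rewrite mulrC -ler_pdivlMr // -lerBrDr.
have h5 : eps * (k * S) <= eps * N F by rewrite ler_wpM2l // ltW.
have -> : N (fun t => F t + y t) = fine M by [].
rewrite /delta in h4.
nra.
Qed.

End Linf.
Section L1.
Context d (T : measurableType d) (R : realType) (X : normedModType R)
  (mu : {measure set T -> \bar R}).
Hypothesis cmu : measure_is_complete mu.
Local Notation I f := (integral mu setT (fun t => ((`|f t|)%:E : \bar R))).
Local Notation V := (L1_space (X:=X) mu).
Local Notation N := (L1_norm (X:=X) mu).

Lemma I_ge0 (f : T -> X) : (0 <= I f)%E.
Proof. by apply: integral_ge0 => t _; rewrite lee_fin. Qed.

Lemma I_fin (f : T -> X) : V f -> I f \is a fin_num.
Proof. by move=> [_ H]; rewrite ge0_fin_numE // I_ge0. Qed.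

Lemma mnorm (f : T -> X) : strongly_measurable mu f ->
  measurable_fun setT (fun t => ((`|f t|)%:E : \bar R)).
Proof. by move=> sf; exact: (proj2 (measurable_EFinP _ _) (SM_norm_meas cmu sf)). Qed.

Lemma I_add (f g : T -> X) : strongly_measurable mu f -> strongly_measurable mu g ->
  (I (fun t => f t + g t) <= I f + I g)%E.
Proof.
move=> sf sg.
have p0 (h : T -> X) : forall t, setT t -> (0 <= ((`|h t|)%:E : \bar R))%E.
  by move=> t _; rewrite lee_fin.
rewrite -(ge0_integralD mu measurableT (p0 f) (mnorm sf) (p0 g) (mnorm sg)).
have mf := mnorm sf; have mg := mnorm sg; have mfg := mnorm (SM_add sf sg).
apply: ge0_le_integral => //.
- by apply: emeasurable_funD.
by move=> t _; rewrite -EFinD lee_fin ler_normD.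
Qed.

Lemma I_scale (a : R) (f : T -> X) : strongly_measurable mu f ->
  I (fun t => a *: f t) = ((`|a|)%:E * I f)%E.
Proof.
move=> sf.
have p0 : forall t, setT t -> (0 <= ((`|f t|)%:E : \bar R))%E.
  by move=> t _; rewrite lee_fin.
rewrite -(ge0_integralZl_EFin mu measurableT p0 (mnorm sf) (normr_ge0 a)).
by congr integral; apply: funext => t; rewrite normrZ EFinM.
Qed.

Lemma L1_V0 : V (fun _ => 0).
Proof.
split; first exact: SM_cst.
have -> : (fun t : T => (`|(0 : X)|)%:E) = cst 0%E.
  by apply: funext => t; rewrite normr0.
by rewrite integral0.
Qed.

Lemma L1_VD f g : V f -> V g -> V (fun t => f t + g t).
Proof.
move=> Vf Vg; split; first exact: SM_add Vf.1 Vg.1.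
apply: le_lt_trans (I_add Vf.1 Vg.1) _.
by rewrite -(fineK (I_fin Vf)) -(fineK (I_fin Vg)) -EFinD ltry.
Qed.

Lemma L1_VZ a f : V f -> V (fun t => a *: f t).
Proof.
move=> Vf; split; first exact: SM_scale Vf.1.
have := I_scale a Vf.1 => ->.
by rewrite -(fineK (I_fin Vf)) -EFinM ltry.
Qed.

Lemma L1_ND f g : V f -> V g -> N (fun t => f t + g t) <= N f + N g.
Proof.
move=> Vf Vg; rewrite /L1_norm.
have Vfg := L1_VD Vf Vg.
rewrite -lee_fin EFinD !fineK ?I_fin //; exact: I_add Vf.1 Vg.1.
Qed.

Lemma L1_NZ a f : V f -> N (fun t => a *: f t) = `|a| * N f.
Proof.
move=> Vf; rewrite /L1_norm; have := I_scale a Vf.1 => ->.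
by rewrite -(fineK (I_fin Vf)) -EFinM /=.
Qed.

Lemma pos_fin_set : sigma_finite setT mu -> (0 < mu setT)%E ->
  exists A, measurable A /\ (0 < mu A)%E /\ (mu A < +oo)%E.
Proof.
move=> [F FE HF] mT.
apply: contrapT => H.
have F0 k : mu (F k) = 0%E.
  apply/eqP; rewrite eq_le measure_ge0 andbT leNgt; apply/negP => Fk.
  by apply: H; exists (F k); split; [exact: (HF k).1| split; [|exact: (HF k).2]].
have : mu.-negligible setT.
  rewrite FE; apply: negligible_bigcup => k.
  exact: ((negligibleP mu (HF k).1).2 (F0 k)).
move/(negligibleP mu measurableT) => H0.
by move: mT; rewrite H0 ltxx.
Qed.

Lemma L1_ind : octahedral X -> sigma_finite setT mu -> (0 < mu setT)%E ->
  forall n (e : 'I_n -> T -> X), (forall i, V (e i)) ->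
  (exists2 k, 0 < k & forall c, k * \sum_i `|c i| <= N (fun t => \sum_(i < n) c i *: e i t)) ->
  forall eps : R, 0 < eps ->
  exists y : T -> X, V y /\ N y = 1 /\
    forall c : 'I_n -> R,
      (1 - eps) * (N (fun t => \sum_(i < n) c i *: e i t) + 1)
        <= N (fun t => \sum_(i < n) c i *: e i t + y t).
Proof.
move=> oct sf mT n e He [k k0 Hk] eps eps0.
have [A [mA [A0 Afin]]] := pos_fin_set sf mT.
pose mA' := fine (mu A).
have mAE : mu A = mA'%:E by rewrite fineK // ge0_fin_numE // ltW.
have mApos : 0 < mA' by rewrite -lte_fin -mAE.
pose a := mA'^-1.
have a0 : 0 < a by rewrite invr_gt0.
have SMe i := (He i).1.
pose delta := eps * k / (4 * mA').
have eps20 : 0 < eps / 2 by rewrite divr_gt0.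
have delta0 : 0 < delta by rewrite divr_gt0 ?mulr_gt0.
have [K [z [HK [Hz Hae]]]] := construct SMe oct eps20 delta0.
pose K' t := if `[< A t >] then (K t).+1 else 0%N.
pose z' k := if k is k'.+1 then a *: z k' else 0.
pose y t := z' (K' t).
have HK' : forall k, measurable (K' @^-1` [set k]).
  case => [|k'].
    have -> : K' @^-1` [set 0%N] = ~` A.
      by apply/seteqP; split => t /=; rewrite /K'; case: asboolP.
    exact: measurableC.
  have -> : K' @^-1` [set k'.+1] = A `&` K @^-1` [set k'].
    apply/seteqP; split => t /=; rewrite /K'; case: asboolP => //=.
    - by move=> At [->].
    - by move=> At [_ ->].
    - by move=> nAt [].
  exact: measurableI.
pose lam t := a * \1_A t.
have ynorm t : `|y t| = lam t.
  rewrite /y /K' /lam indicE; case: asboolP => At /=.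
    by rewrite normrZ Hz mulr1 mem_set // mulr1 gtr0_norm.
  by rewrite normr0 memNset // mulr0.
have mlam : measurable_fun setT (fun t => ((lam t)%:E : \bar R)).
  apply/measurable_EFinP; apply: measurable_funM => //.
have Ilam : integral mu setT (fun t => ((lam t)%:E : \bar R)) = 1%:E.
  have -> : (fun t => ((lam t)%:E : \bar R)) = (fun t => (a%:E * (\1_A t)%:E)%E).
    by apply: funext => t; rewrite /lam EFinM.
  rewrite ge0_integralZl_EFin //; try (by move=> t _; rewrite lee_fin);
    try (exact/measurable_EFinP/measurable_indic); try (exact: ltW).
  by rewrite integral_indic // setIT mAE -EFinM mulVf // gt_eqF.
have Iy : I y = 1%:E.
  rewrite -Ilam; congr integral; apply: funext => t; by rewrite ynorm.
have SMy : strongly_measurable mu y := @SM_countable _ _ _ _ mu K' z' HK'.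
have Vy : V y by split => //; rewrite Iy ltry.
exists y; split => //; split; first by rewrite /L1_norm Iy.
move=> c.
pose F t := \sum_(i < n) c i *: e i t.
have VF : V F := Vsum (@L1_V0) (@L1_VD) (@L1_VZ) c He.
have VFy : V (fun t => F t + y t) := L1_VD VF Vy.
have NF0 : 0 <= N F by rewrite /L1_norm fine_ge0 // I_ge0.
have NFy0 : 0 <= N (fun t => F t + y t) by rewrite /L1_norm fine_ge0 // I_ge0.
have [eps1|eps1] := leP 1 eps.
  apply: le_trans NFy0; rewrite mulr_le0_ge0 //; first by rewrite subr_le0.
  by rewrite addr_ge0.
pose S := \sum_i `|c i|.
have S0 : 0 <= S by apply: sumr_ge0 => i _.
have e2 : 0 < 1 - eps / 2 by lra.
have pw : \forall t \ae mu, setT t ->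
    (((1 - eps / 2) * (`|F t| + lam t))%:E <=
     (`|F t + y t| + 2 * (delta * S) * \1_A t)%:E)%E.
  apply: filterS Hae => t Ht _; rewrite lee_fin.
  rewrite /lam /y /K' indicE; case: asboolP => At /=.
    by rewrite mem_set // !mulr1; exact: Ht c a (ltW a0).
  rewrite memNset //= !mulr0 !addr0 ler_piMl //; lra.
have mF := SM_norm_meas cmu VF.1.
have mFy := SM_norm_meas cmu VFy.1.
have p1 : forall t, setT t -> (0 <= ((1 - eps / 2) * (`|F t| + lam t))%:E)%E.
  move=> t _; rewrite lee_fin; apply: mulr_ge0; first exact: ltW.
  apply: addr_ge0 => //; apply: mulr_ge0; [exact: ltW|by rewrite indicE ler0n].
have m1 : measurable_fun setT (fun t => (((1 - eps / 2) * (`|F t| + lam t))%:E : \bar R)).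
  apply/measurable_EFinP; apply: measurable_funM => //; apply: measurable_funD => //.
  by apply: measurable_funM => //; exact: measurable_indic.
have p2 : forall t, setT t -> (0 <= (`|F t + y t| + 2 * (delta * S) * \1_A t)%:E)%E.
  move=> t _; rewrite lee_fin; apply: addr_ge0 => //; apply: mulr_ge0; last by rewrite indicE ler0n.
  by apply: mulr_ge0 => //; apply: mulr_ge0 => //; exact: ltW.
have m2 : measurable_fun setT (fun t => ((`|F t + y t| + 2 * (delta * S) * \1_A t)%:E : \bar R)).
  apply/measurable_EFinP; apply: measurable_funD => //.
  by apply: measurable_funM => //; exact: measurable_indic.
have int_le := ae_ge0_le_integral measurableT p1 m1 p2 m2 pw.
have L1eq : integral mu setT (fun t => (((1 - eps / 2) * (`|F t| + lam t))%:E : \bar R))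
    = ((1 - eps / 2) * (N F + 1))%:E.
  have -> : (fun t => (((1 - eps / 2) * (`|F t| + lam t))%:E : \bar R)) =
      (fun t => ((1 - eps / 2)%:E * ((`|F t|)%:E + (lam t)%:E))%E).
    by apply: funext => t; rewrite EFinM EFinD.
  have q1 : forall t, setT t -> (0 <= ((`|F t|)%:E + (lam t)%:E : \bar R))%E.
    move=> t _; rewrite -EFinD lee_fin; apply: addr_ge0 => //.
    apply: mulr_ge0; [exact: ltW|by rewrite indicE ler0n].
  have mq1 : measurable_fun setT (fun t => ((`|F t|)%:E + (lam t)%:E : \bar R)%E).
    by apply: emeasurable_funD => //; exact/measurable_EFinP.
  rewrite (ge0_integralZl_EFin mu measurableT q1 mq1 (ltW e2)).
  have r1 : forall t, setT t -> (0 <= ((`|F t|)%:E : \bar R))%E by move=> t _; rewrite lee_fin.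
  have r2 : forall t, setT t -> (0 <= ((lam t)%:E : \bar R))%E.
    move=> t _; rewrite lee_fin; apply: mulr_ge0; [exact: ltW|by rewrite indicE ler0n].
  rewrite (ge0_integralD mu measurableT r1 (proj2 (measurable_EFinP _ _) mF) r2 mlam).
  rewrite Ilam /L1_norm EFinM; congr (_ * _)%E; rewrite EFinD fineK //; exact: I_fin VF.
have R1eq : integral mu setT (fun t => ((`|F t + y t| + 2 * (delta * S) * \1_A t)%:E : \bar R))
    = (N (fun t => F t + y t) + 2 * (delta * S) * mA')%:E.
  have -> : (fun t => ((`|F t + y t| + 2 * (delta * S) * \1_A t)%:E : \bar R)) =
      (fun t => ((`|F t + y t|)%:E + (2 * (delta * S))%:E * (\1_A t)%:E)%E).
    by apply: funext => t; rewrite EFinD EFinM.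
  have r1 : forall t, setT t -> (0 <= ((`|F t + y t|)%:E : \bar R))%E by move=> t _; rewrite lee_fin.
  have dS0 : 0 <= 2 * (delta * S) by apply: mulr_ge0 => //; apply: mulr_ge0 => //; exact: ltW.
  have r2 : forall t, setT t -> (0 <= ((2 * (delta * S))%:E * (\1_A t)%:E : \bar R))%E.
    by move=> t _; rewrite -EFinM lee_fin mulr_ge0 // indicE ler0n.
  have mr2 : measurable_fun setT (fun t => ((2 * (delta * S))%:E * (\1_A t)%:E : \bar R)%E).
    apply/measurable_EFinP => /=.
    have -> : (fun t => (2 * (delta * S)) * \1_A t) = (fun t => (2 * (delta * S)) * \1_A t) by [].
    by apply: measurable_funM => //; exact: measurable_indic.
  rewrite (ge0_integralD mu measurableT r1 (proj2 (measurable_EFinP _ _) mFy) r2 mr2).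
  have s1 : forall t, setT t -> (0 <= ((\1_A t)%:E : \bar R))%E.
    by move=> t _; rewrite lee_fin indicE ler0n.
  have ms1 : measurable_fun setT (fun t => ((\1_A t)%:E : \bar R)).
    by apply/measurable_EFinP; exact: measurable_indic.
  rewrite (ge0_integralZl_EFin mu measurableT s1 ms1 dS0).
  by rewrite integral_indic // setIT /L1_norm EFinD (fineK (I_fin VFy)) mAE -EFinM.
rewrite L1eq R1eq lee_fin in int_le.
have kS : k * S <= N F := Hk c.
have h5 : eps * (k * S) <= eps * N F by rewrite ler_wpM2l // ltW.
have h6 : 2 * (delta * S) * mA' = eps * (k * S) / 2.
  by rewrite /delta; field; rewrite gt_eqF.
rewrite h6 in int_le.
nra.
Qed.

End L1.
Unset Implicit Arguments.

Theorem proposition4p2 (d : measure_display) (T : measurableType d)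
  (R : realType) (mu : {measure set T -> \bar R})
  (X : completeNormedModType R) :
  measure_is_complete mu ->
  sigma_finite setT mu ->
  (0 < mu setT)%E ->
  octahedral X ->
  octahedral_fun (L1_space (X:=X) mu) (L1_norm (X:=X) mu) /\
  octahedral_fun (Linfty_space (X:=X) mu) (Linfty_norm (X:=X) mu).
Proof.
move=> cmu sf mT oct; split.
  apply: octa_reduce.
  - exact: L1_V0.
  - exact: L1_VD.
  - exact: L1_VZ.
  - exact: L1_ND.
  - exact: L1_NZ.
  - exact: (L1_ind cmu oct sf mT).
apply: octa_reduce.
- exact: Linf_V0.
- exact: Linf_VD.
- exact: Linf_VZ.
- exact: Linf_ND.
- exact: Linf_NZ.
- exact: (Linf_ind mT oct).
Qed.
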